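(* Let $n\ge0$ and let $X_1,\dots,X_n$ be tame $E\mathcal M$-categories. Consider the $E\mathcal M$-category $E\mathrm{Inj}(\mathbf n\times\omega,\omega)\times_{E\mathcal M^n}(X_1\times\dots\times X_n)$ and the natural $E\mathcal M$-functor $$\Phi\colon E\mathrm{Inj}(\mathbf n\times\omega,\omega)\times_{E\mathcal M^n}(X_1\times\cdots\times X_n)\to X_1\times\cdots\times X_n,$$ given on objects by $[f;x_1,\dots,x_n]\mapsto(f(1,-).x_1,\dots,f(n,-).x_n)$ and analogously on morphisms. Then $\Phi$ is an isomorphism onto the full subcategory $X_1\boxtimes\cdots\boxtimes X_n$ of tuples of objects with pairwise disjoint supports.
   Context: $\omega=\{0,1,2,\dots\}$, $\mathcal M$ is the monoid of injective self-maps of $\omega$, and $E\mathcal M$ is the indiscrete category on $\mathcal M$, a monoid in $\mathbf{Cat}$ via composition. For a set $S$, $ES$ is the indiscrete category on $S$. $\mathbf n=\{1,\dots,n\}$. For an injection $f\colon\mathbf n\times\omega\to\omega$, $f(i,-)\in\mathcal M$. $\mathcal M^n$ acts from the right on $\mathrm{Inj}(\mathbf n\times\omega,\omega)$ by $f.(u_1,\dots,u_n)=f\circ(u_1\amalg\cdots\amalg u_n)$, inducing a right $E\mathcal M^n$-action on $E\mathrm{Inj}(\mathbf n\times\omega,\omega)$; $E\mathcal M$ acts on it from the left by postcomposition. The category $E\mathrm{Inj}(\mathbf n\times\omega,\omega)\times_{E\mathcal M^n}(X_1\times\cdots\times X_n)$ is the coequalizer of the right $E\mathcal M^n$-action on the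 first factor and the left action on the second factor. An object $x$ of an $E\mathcal M$-category is supported on a finite set $A\subset\omega$ if $u.x=x$ for every $u\in\mathcal M$ fixing $A$ pointwise; the support $\mathrm{supp}(x)$ is the smallest such set; an $E\mathcal M$-category is tame if every object is supported on some finite set. *)

(* Defs.v *)
From mathcomp Require Import all_boot.
From Stdlib Require Import FunctionalExtensionality.

Set Implicit Arguments.
Unset Strict Implicit.
Unset Printing Implicit Defensive.

Record Category := {
  Ob :> Type;
  Hom : Ob -> Ob -> Type;
  idm : forall a, Hom a a;
  comp : forall x y z, Hom y z -> Hom x y -> Hom x z;
  comp_idl : forall a b (f : Hom a b), comp (idm b) f = f;
  comp_idr : forall a b (f : Hom a b), comp f (idm a) = f;
  comp_assoc : forall a b c d (f : Hom a b) (g : Hom b c) (h : Hom c d),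
      comp h (comp g f) = comp (comp h g) f }.
Arguments Hom {_} _ _.
Arguments idm {_} _.
Arguments comp {_ _ _ _} _ _.

Definition hcast (C : Category) (a b a' b' : C) (ea : a = a') (eb : b = b')
  (f : Hom a b) : Hom a' b' :=
  match ea in _ = a0 return Hom a0 b' with
  | erefl => match eb in _ = b0 return Hom a b0 with erefl => f end
  end.

Record Functor (C D : Category) := {
  fobj :> C -> D;
  fhom : forall a b, Hom a b -> Hom (fobj a) (fobj b);
  fhom_id : forall a, fhom (idm a) = idm (fobj a);
  fhom_comp : forall a b c (f : Hom a b) (g : Hom b c),
      fhom (comp g f) = comp (fhom g) (fhom f) }.
Arguments fhom {_ _} _ {_ _} _.

Definition fcomp_obj C D E (G : Functor D E) (F : Functor C D) (a : C) : E :=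
  G (F a).
Lemma fcomp_id C D E (G : Functor D E) (F : Functor C D) (a : C) :
  fhom G (fhom F (idm a)) = idm (G (F a)).
Proof. by rewrite !fhom_id. Qed.
Lemma fcomp_comp C D E (G : Functor D E) (F : Functor C D) (a b c : C)
  (f : Hom a b) (g : Hom b c) :
  fhom G (fhom F (comp g f)) = comp (fhom G (fhom F g)) (fhom G (fhom F f)).
Proof. by rewrite !fhom_comp. Qed.
Definition fcomp C D E (G : Functor D E) (F : Functor C D) : Functor C E :=
  {| fobj := fcomp_obj G F;
     fhom := fun a b f => fhom G (fhom F f);
     fhom_id := fcomp_id G F;
     fhom_comp := fcomp_comp G F |}.

Definition feq C D (F G : Functor C D) : Prop :=
  exists eo : forall x, F x = G x,
    forall x y (f : Hom x y), hcast (eo x) (eo y) (fhom F f) = fhom G f.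

Definition is_coequalizer A B (F G : Functor A B) (Q : Category)
  (q : Functor B Q) : Prop :=
  feq (fcomp q F) (fcomp q G) /\
  forall (D : Category) (h : Functor B D),
    feq (fcomp h F) (fcomp h G) ->
    exists k : Functor Q D,
      feq (fcomp k q) h /\ forall k' : Functor Q D, feq (fcomp k' q) h -> feq k' k.

Lemma unit_eq (f : unit) : tt = f. Proof. by case: f. Qed.
Definition ECat (S : Type) : Category :=
  {| Ob := S; Hom := fun _ _ => unit; idm := fun _ => tt;
     comp := fun _ _ _ _ _ => tt;
     comp_idl := fun _ _ f => unit_eq f;
     comp_idr := fun _ _ f => unit_eq f;
     comp_assoc := fun _ _ _ _ _ _ _ => erefl |}.

Section Prod.
Variables C D : Category.
Definition prod_hom (a b : C * D) := (Hom a.1 b.1 * Hom a.2 b.2)%type.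
Definition prod_id (a : C * D) : prod_hom a a := (idm a.1, idm a.2).
Definition prod_comp (a b c : C * D) (g : prod_hom b c) (f : prod_hom a b)
  : prod_hom a c := (comp g.1 f.1, comp g.2 f.2).
Lemma prod_idl a b (f : prod_hom a b) : prod_comp (prod_id b) f = f.
Proof. by case: f => f1 f2; rewrite /prod_comp /= !comp_idl. Qed.
Lemma prod_idr a b (f : prod_hom a b) : prod_comp f (prod_id a) = f.
Proof. by case: f => f1 f2; rewrite /prod_comp /= !comp_idr. Qed.
Lemma prod_assoc a b c d (f : prod_hom a b) (g : prod_hom b c) (h : prod_hom c d) :
  prod_comp h (prod_comp g f) = prod_comp (prod_comp h g) f.
Proof. by rewrite /prod_comp /= !comp_assoc. Qed.
Definition prodCat : Category :=
  {| Ob := (C * D)%type; Hom := prod_hom; idm := prod_id; comp := prod_comp;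
     comp_idl := prod_idl; comp_idr := prod_idr; comp_assoc := prod_assoc |}.
End Prod.

Section Pi.
Variables (I : Type) (X : I -> Category).
Definition pi_hom (a b : forall i, X i) := forall i, Hom (a i) (b i).
Definition pi_id (a : forall i, X i) : pi_hom a a := fun i => idm (a i).
Definition pi_comp (a b c : forall i, X i) (g : pi_hom b c) (f : pi_hom a b)
  : pi_hom a c := fun i => comp (g i) (f i).
Lemma pi_idl a b (f : pi_hom a b) : pi_comp (pi_id b) f = f.
Proof. apply: functional_extensionality_dep => i; exact: comp_idl. Qed.
Lemma pi_idr a b (f : pi_hom a b) : pi_comp f (pi_id a) = f.
Proof. apply: functional_extensionality_dep => i; exact: comp_idr. Qed.
Lemma pi_assoc a b c d (f : pi_hom a b) (g : pi_hom b c) (h : pi_hom c d) :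
  pi_comp h (pi_comp g f) = pi_comp (pi_comp h g) f.
Proof. apply: functional_extensionality_dep => i; exact: comp_assoc. Qed.
Definition piCat : Category :=
  {| Ob := forall i, X i; Hom := pi_hom; idm := pi_id; comp := pi_comp;
     comp_idl := pi_idl; comp_idr := pi_idr; comp_assoc := pi_assoc |}.
End Pi.

Record Mon := { mfun :> nat -> nat; minj : injective mfun }.
Definition idM : Mon := {| mfun := id; minj := @inj_id nat |}.
Definition mulM (u v : Mon) : Mon :=
  {| mfun := u \o v; minj := inj_comp (@minj u) (@minj v) |}.

(* The action functor EM x X -> X: on objects (u, x) |-> u.x, on morphisms
   ((u -> v), f : x -> y) |-> acth u v f : u.x -> v.y (EM is indiscrete). *)
Record EMCat := {
  emC :> Category;
  act : Mon -> emC -> emC;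
  acth : forall (u v : Mon) (x y : emC), Hom x y -> Hom (act u x) (act v y);
  acth_id : forall u (x : emC), acth u u (idm x) = idm (act u x);
  acth_comp : forall u v w (x y z : emC) (f : Hom x y) (g : Hom y z),
      comp (acth v w g) (acth u v f) = acth u w (comp g f);
  act_unit : forall x, act idM x = x;
  act_assoc : forall u v x, act u (act v x) = act (mulM u v) x;
  acth_unit : forall (x y : emC) (f : Hom x y),
      hcast (act_unit x) (act_unit y) (acth idM idM f) = f;
  acth_assoc : forall u v u' v' (x y : emC) (f : Hom x y),
      hcast (act_assoc u' u x) (act_assoc v' v y) (acth u' v' (acth u v f))
      = acth (mulM u' u) (mulM v' v) f }.

Definition supported (X : EMCat) (x : X) (A : seq nat) : Prop :=
  forall u : Mon, (forall a, a \in A -> u a = a) -> act u x = x.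

(* supp(x): the smallest finite supporting set; defined as the intersection of
   all finite supporting sets (which is the smallest one whenever it exists). *)
Definition supp (X : EMCat) (x : X) (a : nat) : Prop :=
  forall A : seq nat, supported x A -> a \in A.

Definition tame (X : EMCat) : Prop := forall x : X, exists A, supported x A.

Record InjN (n : nat) := { jfun :> 'I_n * nat -> nat; jinj : injective jfun }.

Lemma slice_inj n (f : InjN n) (i : 'I_n) : injective (fun k => f (i, k)).
Proof. by move=> a b /jinj [] . Qed.
Definition slice n (f : InjN n) (i : 'I_n) : Mon :=
  {| mfun := fun k => f (i, k); minj := @slice_inj n f i |}.

Lemma ract_inj n (f : InjN n) (u : 'I_n -> Mon) :
  injective (fun p : 'I_n * nat => f (p.1, u p.1 p.2)).
Proof.
move=> [i a] [j b] /jinj /= [ei]; subst j => /minj ->; by [].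
Qed.
Definition ract n (f : InjN n) (u : 'I_n -> Mon) : InjN n :=
  {| jfun := fun p => f (p.1, u p.1 p.2); jinj := @ract_inj n f u |}.

Section Coeq.
Variables (n : nat) (X : 'I_n -> EMCat).

Definition PX : Category := piCat (fun i => emC (X i)).
Definition EInj : Category := ECat (InjN n).
Definition EMn : Category := ECat ('I_n -> Mon).

Definition Dom : Category := prodCat (prodCat EInj EMn) PX.
Definition Cod : Category := prodCat EInj PX.

Definition Lobj (a : Dom) : Cod := (ract a.1.1 a.1.2, a.2).
Definition Lhom (a b : Dom) (h : Hom a b) : Hom (Lobj a) (Lobj b) := (tt, h.2).
Lemma Lhom_id a : Lhom (idm a) = idm (Lobj a). Proof. by []. Qed.
Lemma Lhom_comp a b c (f : Hom a b) (g : Hom b c) :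
  Lhom (comp g f) = comp (Lhom g) (Lhom f).
Proof. by []. Qed.
Definition Lfun : Functor Dom Cod :=
  {| fobj := Lobj; fhom := Lhom; fhom_id := Lhom_id; fhom_comp := Lhom_comp |}.

Definition Robj (a : Dom) : Cod := (a.1.1, fun i => act (a.1.2 i) (a.2 i)).
Definition Rhom (a b : Dom) (h : Hom a b) : Hom (Robj a) (Robj b) :=
  (tt, fun i => acth (a.1.2 i) (b.1.2 i) (h.2 i)).
Lemma Rhom_id a : Rhom (idm a) = idm (Robj a).
Proof.
rewrite /Rhom; congr pair; apply: functional_extensionality_dep => i.
exact: acth_id.
Qed.
Lemma Rhom_comp a b c (f : Hom a b) (g : Hom b c) :
  Rhom (comp g f) = comp (Rhom g) (Rhom f).
Proof.
rewrite /Rhom; congr pair; apply: functional_extensionality_dep => i.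
by rewrite /= /pi_comp acth_comp.
Qed.
Definition Rfun : Functor Dom Cod :=
  {| fobj := Robj; fhom := Rhom; fhom_id := Rhom_id; fhom_comp := Rhom_comp |}.

Definition Psiobj (a : Cod) : PX := fun i => act (slice a.1 i) (a.2 i).
Definition Psihom (a b : Cod) (h : Hom a b) : Hom (Psiobj a) (Psiobj b) :=
  fun i => acth (slice a.1 i) (slice b.1 i) (h.2 i).
Lemma Psihom_id a : Psihom (idm a) = idm (Psiobj a).
Proof. apply: functional_extensionality_dep => i; exact: acth_id. Qed.
Lemma Psihom_comp a b c (f : Hom a b) (g : Hom b c) :
  Psihom (comp g f) = comp (Psihom g) (Psihom f).
Proof.
apply: functional_extensionality_dep => i.
by rewrite /Psihom /= /pi_comp acth_comp.
Qed.
Definition Psi : Functor Cod PX :=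
  {| fobj := Psiobj; fhom := Psihom; fhom_id := Psihom_id;
     fhom_comp := Psihom_comp |}.

Definition disjoint_supports (x : PX) : Prop :=
  forall i j : 'I_n, i != j -> forall a, supp (x i) a -> supp (x j) a -> False.

End Coeq.

(* Main.v *)
From mathcomp Require Import all_boot.
Require Import Defs.
From Stdlib Require Import FunctionalExtensionality ProofIrrelevance ClassicalEpsilon PropExtensionality Classical.

Set Implicit Arguments.
Unset Strict Implicit.
Unset Printing Implicit Defensive.



Section CatLemmas.
Variable C : Category.

Definition heq (a b a' b' : C) (f : Hom a b) (g : Hom a' b') : Prop :=
  exists (ea : a = a') (eb : b = b'), hcast ea eb f = g.

Lemma hcast_irr (a b a' b' : C) (ea ea' : a = a') (eb eb' : b = b') f :
  hcast ea eb f = hcast ea' eb' f.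
Proof. by rewrite (proof_irrelevance _ ea ea') (proof_irrelevance _ eb eb'). Qed.

Lemma heq_refl a b (f : Hom a b) : heq f f.
Proof. by exists erefl, erefl. Qed.

Lemma heq_sym a b a' b' (f : Hom a b) (g : Hom a' b') : heq f g -> heq g f.
Proof.
case=> ea [eb E]; subst g; exists (esym ea), (esym eb).
by case: a' / ea; case: b' / eb.
Qed.

Lemma heq_trans a b a' b' a'' b'' (f : Hom a b) (g : Hom a' b') (h : Hom a'' b'') :
  heq f g -> heq g h -> heq f h.
Proof.
case=> ea [eb E] [ea' [eb' E']]; subst g h; exists (etrans ea ea'), (etrans eb eb').
by case: a'' / ea'; case: b'' / eb'; case: a' / ea; case: b' / eb.
Qed.

Lemma heq_eq a b (f g : Hom a b) : heq f g -> f = g.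
Proof.
case=> ea [eb <-].
by rewrite (proof_irrelevance _ ea erefl) (proof_irrelevance _ eb erefl).
Qed.

Lemma heq_hcast a b a' b' (ea : a = a') (eb : b = b') (f : Hom a b) :
  heq (hcast ea eb f) f.
Proof. by apply: heq_sym; exists ea, eb. Qed.

Lemma heq_obj a b a' b' (f : Hom a b) (g : Hom a' b') : heq f g -> a = a' /\ b = b'.
Proof. by case=> ea [eb _]. Qed.

Lemma heq_comp a b c a' b' c' (f : Hom a b) (g : Hom b c) (f' : Hom a' b')
  (g' : Hom b' c') : heq f f' -> heq g g' -> heq (comp g f) (comp g' f').
Proof.
case=> ea [eb E] [eb' [ec E']]; subst f' g'.
case: a' / ea; case: b' / eb eb'; case: c' / ec => eb'.
by rewrite (proof_irrelevance _ eb' erefl); apply: heq_refl.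
Qed.

Lemma hcast_inj (a b a' b' : C) (ea : a = a') (eb : b = b') (f g : Hom a b) :
  hcast ea eb f = hcast ea eb g -> f = g.
Proof. by case: a' / ea; case: b' / eb. Qed.

Lemma hcast_idm (a a' : C) (ea ea' : a = a') : hcast ea ea' (idm a) = idm a'.
Proof. rewrite (proof_irrelevance _ ea' ea); clear ea'; by case: a' / ea. Qed.

Lemma hcast_comp (a b c a' b' c' : C) (ea : a = a') (eb : b = b') (ec : c = c')
  (f : Hom a b) (g : Hom b c) :
  hcast ea ec (comp g f) = comp (hcast eb ec g) (hcast ea eb f).
Proof. by case: a' / ea; case: b' / eb; case: c' / ec. Qed.

End CatLemmas.

Lemma heq_fhom (C D : Category) (F : Functor C D) a b a' b' (f : Hom a b)
  (g : Hom a' b') : heq f g -> heq (fhom F f) (fhom F g).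
Proof.
case=> ea [eb E]; subst g; case: a' / ea; case: b' / eb; exact: heq_refl.
Qed.

Lemma feqP (C D : Category) (F G : Functor C D) :
  (forall x, F x = G x) -> (forall x y (f : Hom x y), heq (fhom F f) (fhom G f)) ->
  feq F G.
Proof.
move=> eo H; exists eo => x y f; case: (H x y f) => ea [eb <-].
exact: hcast_irr.
Qed.

Lemma feq_obj (C D : Category) (F G : Functor C D) : feq F G -> forall x, F x = G x.
Proof. by case=> eo _. Qed.

Lemma feq_hom (C D : Category) (F G : Functor C D) : feq F G ->
  forall x y (f : Hom x y), heq (fhom F f) (fhom G f).
Proof. case=> eo H x y f; exists (eo x), (eo y); exact: H. Qed.

Lemma feq_refl (C D : Category) (F : Functor C D) : feq F F.
Proof. apply: feqP => // x y f; exact: heq_refl. Qed.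

Lemma feq_sym (C D : Category) (F G : Functor C D) : feq F G -> feq G F.
Proof.
move=> H; apply: feqP => [x|x y f]; first by rewrite (feq_obj H).
apply: heq_sym; exact: feq_hom.
Qed.

Lemma feq_trans (C D : Category) (F G K : Functor C D) :
  feq F G -> feq G K -> feq F K.
Proof.
move=> H1 H2; apply: feqP => [x|x y f]; first by rewrite (feq_obj H1) (feq_obj H2).
apply: heq_trans (feq_hom H1 f) (feq_hom H2 f).
Qed.

Lemma feq_compl (B C D : Category) (H : Functor C D) (F G : Functor B C) :
  feq F G -> feq (fcomp H F) (fcomp H G).
Proof.
move=> E; apply: feqP => [x|x y f] /=; first by rewrite /fcomp_obj (feq_obj E).
apply: heq_fhom; exact: feq_hom.
Qed.

Lemma feq_compr (B C D : Category) (H : Functor B C) (F G : Functor C D) :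
  feq F G -> feq (fcomp F H) (fcomp G H).
Proof.
move=> E; apply: feqP => [x|x y f] /=; first by rewrite /fcomp_obj (feq_obj E).
exact: feq_hom.
Qed.

Lemma feq_assoc (A B C D : Category) (F : Functor A B) (G : Functor B C)
  (H : Functor C D) : feq (fcomp (fcomp H G) F) (fcomp H (fcomp G F)).
Proof. apply: feqP => // x y f; exact: heq_refl. Qed.

Definition idF (C : Category) : Functor C C :=
  {| fobj := fun x => x; fhom := fun a b f => f;
     fhom_id := fun a => erefl; fhom_comp := fun a b c f g => erefl |}.

Lemma feq_idl (C D : Category) (F : Functor C D) : feq (fcomp (idF D) F) F.
Proof. apply: feqP => // x y f; exact: heq_refl. Qed.

Lemma coeq_uniq A B (F G : Functor A B) Q (q : Functor B Q) :
  is_coequalizer F G q -> forall D (k1 k2 : Functor Q D),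
  feq (fcomp k1 q) (fcomp k2 q) -> feq k1 k2.
Proof.
move=> [H1 H2] D k1 k2 E.
have hc : feq (fcomp (fcomp k1 q) F) (fcomp (fcomp k1 q) G).
  apply: feq_trans (feq_assoc _ _ _) _.
  apply: feq_trans _ (feq_sym (feq_assoc _ _ _)).
  exact: feq_compl.
case: (H2 D (fcomp k1 q) hc) => k [_ U].
apply: feq_trans (U k1 (feq_refl _)) (feq_sym (U k2 (feq_sym E))).
Qed.

Definition constP (C : Category) (P : C -> Prop) : Functor C (ECat Prop) :=
  {| fobj := (P : C -> ECat Prop); fhom := fun a b f => (tt : @Hom (ECat Prop) (P a) (P b));
     fhom_id := fun a => erefl; fhom_comp := fun a b c f g => erefl |}.

Lemma coeq_surj A B (F G : Functor A B) Q (q : Functor B Q) :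
  is_coequalizer F G q -> forall a : Q, exists b, q b = a.
Proof.
move=> cq a.
have E : feq (fcomp (constP (fun _ : Q => True)) q)
             (fcomp (constP (fun a : Q => exists b, q b = a)) q).
  apply: feqP => [x|x y f] /=.
    rewrite /fcomp_obj /=; apply: propositional_extensionality; split=> // _.
    by exists x.
  have ea : True = exists b, q b = q x.
    by apply: propositional_extensionality; split=> // _; exists x.
  have eb : True = exists b, q b = q y.
    by apply: propositional_extensionality; split=> // _; exists y.
  exists ea, eb; by case: (hcast _ _ _).
have := feq_obj (coeq_uniq cq E) a => /= <-. done.
Qed.



Lemma monE (u v : Mon) : (forall k, u k = v k) -> u = v.
Proof.
case: u v => [f fi] [g gi] /= H.
have E : f = g by apply: functional_extensionality.
subst g; by rewrite (proof_irrelevance _ fi gi).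
Qed.

Lemma InjNE n (f g : InjN n) : (forall p, f p = g p) -> f = g.
Proof.
case: f g => [f fi] [g gi] /= H.
have E : f = g by apply: functional_extensionality.
subst g; by rewrite (proof_irrelevance _ fi gi).
Qed.

Definition mkMon (g : nat -> nat) (H : injective g) : Mon := {| mfun := g; minj := H |}.

Lemma ext_inj (D : seq nat) (g : nat -> nat) :
  {in D &, injective g} -> exists rho : Mon, forall k, k \in D -> rho k = g k.
Proof.
move=> Hg; set K := (\max_(k <- D) g k).+1.
have HK k : k \in D -> g k < K.
  by move=> kD; rewrite ltnS; apply: (leq_bigmax_seq (F:=g) k kD).
pose r k := if k \in D then g k else K + k.
have ri : injective r.
  move=> k1 k2; rewrite /r; case: ifP => h1; case: ifP => h2.
  - exact: Hg.
  - by move=> E; have := HK _ h1; rewrite E ltnNge leq_addr.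
  - by move=> E; have := HK _ h2; rewrite -E ltnNge leq_addr.
  - by move/eqP; rewrite eqn_add2l => /eqP.
exists (mkMon ri) => k kD /=; by rewrite /r kD.
Qed.

Definition swapf (a b k : nat) := if k == a then b else if k == b then a else k.
Lemma swapfK a b : cancel (swapf a b) (swapf a b).
Proof.
move=> k; rewrite /swapf.
case: (eqVneq k a) => [->|ka]; first by rewrite eqxx; case: eqVneq.
case: (eqVneq k b) => [->|kb]; first by rewrite eqxx.
by rewrite (negPf ka) (negPf kb).
Qed.

Lemma perm_ext (A : seq nat) (u : Mon) : uniq A ->
  exists pi pi' : Mon, [/\ forall k, pi (pi' k) = k, forall k, pi' (pi k) = k
                        & forall a, a \in A -> pi a = u a].
Proof.
elim: A => [|a A IH] /=.
  by move=> _; exists idM, idM.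
case/andP=> aA uA; case: (IH uA) => r [r' [rK r'K rA]].
pose s := swapf (u a) (r a).
have c1 : cancel (s \o r) (r' \o s).
  by move=> k /=; rewrite /s swapfK r'K.
have c2 : cancel (r' \o s) (s \o r).
  by move=> k /=; rewrite rK /s swapfK.
exists (mkMon (can_inj c1)), (mkMon (can_inj c2)); split => // b.
rewrite inE /= /s /swapf; case/orP => [/eqP->|bA].
  by rewrite eqxx; case: eqVneq.
have ub : u b != u a by apply: contra aA => /eqP /minj <-.
have rb : r b != r a by apply: contra aA => /eqP /minj <-.
by rewrite (rA _ bA) (negPf ub) -(rA _ bA) (negPf rb).
Qed.

Section Supports.
Variable X : EMCat.
Implicit Types (x : X) (A B : seq nat).

Lemma supported_sub x A B : supported x A -> {subset A <= B} -> supported x B.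
Proof. move=> sx AB u Hu; apply: sx => a aA; exact/Hu/AB. Qed.

Lemma act_idM x : act idM x = x. Proof. exact: act_unit. Qed.

Lemma act_mul u v x : act (mulM u v) x = act u (act v x).
Proof. by rewrite act_assoc. Qed.

Lemma act_perm_agree x A (w pi pi' : Mon) :
  supported x A -> (forall k, pi (pi' k) = k) -> (forall k, pi' (pi k) = k) ->
  (forall a, a \in A -> pi a = w a) -> act w x = act pi x.
Proof.
move=> sx piK pi'K Hw.
have fixA : forall a, a \in A -> mulM pi' w a = a.
  by move=> a aA /=; rewrite -Hw // pi'K.
have -> : w = mulM pi (mulM pi' w) by apply: monE => k /=; rewrite piK.
by rewrite act_mul (sx _ fixA).
Qed.

Lemma agree_act x A (u v : Mon) : supported x A ->
  (forall a, a \in A -> u a = v a) -> act u x = act v x.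
Proof.
move=> sx Huv; case: (perm_ext u (undup_uniq A)) => pi [pi' [piK pi'K Hpi]].
have H1 : forall a, a \in A -> pi a = u a by move=> a aA; apply: Hpi; rewrite mem_undup.
rewrite (act_perm_agree sx piK pi'K H1) (act_perm_agree (w := v) sx piK pi'K) //.
by move=> a aA; rewrite H1 // Huv.
Qed.

Lemma supported_act x A (u : Mon) : supported x A -> supported (act u x) (map u A).
Proof.
move=> sx t Ht; rewrite -act_mul; apply: (agree_act sx) => a aA /=.
by apply: Ht; apply: map_f.
Qed.

Lemma act_invK (pi pi' : Mon) x : (forall k, pi' (pi k) = k) -> act pi' (act pi x) = x.
Proof.
move=> H; rewrite -act_mul.
have -> : mulM pi' pi = idM by apply: monE => k /=; rewrite H.
exact: act_idM.
Qed.

Lemma supported_inter x A B : supported x A -> supported x B ->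
  supported x [seq a <- A | a \in B].
Proof.
move=> sA sB s Hs.
have sAB : forall a, a \in A -> a \in B -> s a = a.
  by move=> a aA aB; apply: Hs; rewrite mem_filter aB.
set N := (\max_(a <- A) maxn a (s a)).+1.
have HN a : a \in A -> a < N /\ s a < N.
  move=> aA; have := leq_bigmax_seq (F := fun a => maxn a (s a)) a aA isT.
  by rewrite geq_max -/N => /andP [h1 h2]; rewrite /N !ltnS.
pose th k := if k \in A then k else N + k.
have thi : injective th.
  move=> k1 k2; rewrite /th; case: ifP => h1; case: ifP => h2 //.
  - by move=> E; have := (HN _ h1).1; rewrite E ltnNge leq_addr.
  - by move=> E; have := (HN _ h2).1; rewrite -E ltnNge leq_addr.
  - by move/eqP; rewrite eqn_add2l => /eqP.
pose T := mkMon thi.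
have xT : act T x = x.
  by rewrite -{2}(act_idM x); apply: (agree_act sA) => a aA /=; rewrite /th aA.
pose Cl := [seq N + b | b <- B & b \notin A].
pose g k := if k \in A then s k else k.
have gi : {in A ++ Cl &, injective g}.
  move=> k1 k2; rewrite !mem_cat /g.
  have Cbig k : k \in Cl -> N <= k.
    by case/mapP => b _ ->; rewrite leq_addr.
  case: ifP => h1; case: ifP => h2 //=.
  - by move=> _ _; apply: minj.
  - move=> _ /Cbig h E; have := (HN _ h1).2; by rewrite E ltnNge h.
  - move=> /Cbig h _ E; have := (HN _ h2).2; by rewrite -E ltnNge h.
case: (ext_inj gi) => rho Hrho.
have e1 : act rho x = act s x.
  apply: (agree_act sA) => a aA; by rewrite Hrho ?mem_cat ?aA // /g aA.
have e2 : act (mulM rho T) x = act T x.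
  apply: (agree_act sB) => b bB /=; rewrite /th.
  case: ifP => bA.
    by rewrite Hrho ?mem_cat ?bA // /g bA sAB.
  have NA : (N + b \in A) = false.
    apply/negbTE/negP => h; have := (HN _ h).1; by rewrite ltnNge leq_addr.
  rewrite Hrho /g ?NA //; rewrite mem_cat; apply/orP; right.
  by apply/mapP; exists b => //; rewrite mem_filter bA bB.
by rewrite -e1 -{2}xT -e2 act_mul xT.
Qed.

Lemma act_inj_supp x1 x2 A1 A2 (u : Mon) : supported x1 A1 -> supported x2 A2 ->
  act u x1 = act u x2 -> x1 = x2.
Proof.
move=> s1 s2 E.
case: (perm_ext u (undup_uniq (A1 ++ A2))) => pi [pi' [piK pi'K Hpi]].
have e1 : act u x1 = act pi x1.
  apply: (act_perm_agree s1 piK pi'K) => a aA; apply: Hpi.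
  by rewrite mem_undup mem_cat aA.
have e2 : act u x2 = act pi x2.
  apply: (act_perm_agree s2 piK pi'K) => a aA; apply: Hpi.
  by rewrite mem_undup mem_cat aA orbT.
by rewrite -(act_invK x1 pi'K) -(act_invK x2 pi'K) -e1 -e2 E.
Qed.

Lemma supported_pre x A B (u : Mon) : supported x A -> supported (act u x) B ->
  supported x [seq a <- A | u a \in B].
Proof.
move=> sA sB.
set Cl := [seq a <- A | u a \in B].
have sC : supported (act u x) (map u Cl).
  have h1 := supported_inter (supported_act (u:=u) sA) sB.
  apply: (supported_sub h1).
  move=> b; rewrite mem_filter => /andP [bB /mapP [a aA E]]; subst b.
  by apply: map_f; rewrite mem_filter bB aA.
case: (perm_ext u (undup_uniq A)) => pi [pi' [piK pi'K Hpi]].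
have HA : forall a, a \in A -> pi a = u a by move=> a aA; apply: Hpi; rewrite mem_undup.
have epi : act u x = act pi x by apply: (act_perm_agree sA piK pi'K).
move=> s Hs.
pose t := mulM pi (mulM s pi').
have tfix : forall b, b \in map u Cl -> t b = b.
  move=> b /mapP [c cC ->] /=.
  have cA : c \in A by move: cC; rewrite mem_filter => /andP [].
  by rewrite -(HA _ cA) pi'K Hs.
have := sC t tfix; rewrite epi -act_mul.
have -> : mulM t pi = mulM pi s by apply: monE => k /=; rewrite pi'K.
rewrite act_mul => E.
by rewrite -(act_invK (act s x) pi'K) E act_invK.
Qed.

Lemma supp_sub x A a : supported x A -> supp x a -> a \in A.
Proof. by move=> sA; apply. Qed.

Definition pb (P : Prop) : bool := if excluded_middle_informative P then true else false.
Lemma pbP (P : Prop) : pb P <-> P.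
Proof. by rewrite /pb; case: excluded_middle_informative. Qed.

Lemma min_support x B : supported x B ->
  exists A, [/\ uniq A, supported x A & forall a, a \in A <-> supp x a].
Proof.
move=> sB.
have H : forall L : seq nat, supported x [seq b <- B | (b \notin L) || pb (supp x b)].
  elim=> [|l L IH].
    by apply: (supported_sub sB) => b bB; rewrite mem_filter bB andbT.
  case: (classic (supp x l)) => hl.
    apply: (supported_sub IH) => b; rewrite !mem_filter !inE negb_or.
    case/andP => h ->; rewrite andbT.
    case: (eqVneq b l) => [->|bl] /=; first by apply/pbP.
    done.
  have [Cl [sCl lCl]] : exists Cl, supported x Cl /\ l \notin Cl.
    apply: NNPP => hn; apply: hl => Cl sCl; apply: NNPP => hc.
    by apply: hn; exists Cl; split=> //; apply/negP.
  apply: (supported_sub (supported_inter IH sCl)) => b.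
  rewrite !mem_filter !inE negb_or => /andP [bC /andP [h ->]]; rewrite andbT.
  case: (eqVneq b l) => [E|bl] /=; last done.
  by subst b; rewrite bC in lCl.
exists (undup [seq b <- B | pb (supp x b)]); split.
- exact: undup_uniq.
- apply: (supported_sub (H B)) => b; rewrite mem_undup !mem_filter.
  by case/andP => h bB; rewrite bB andbT; move: h; rewrite bB.
- move=> a; rewrite mem_undup mem_filter; split.
    by case/andP => /pbP.
  by move=> h; rewrite (supp_sub sB h) andbT; apply/pbP.
Qed.

Lemma supp_act x A (u : Mon) b : supported x A ->
  supp (act u x) b <-> exists2 a, supp x a & b = u a.
Proof.
move=> sA; split.
  move=> hb; have := supp_sub (supported_act (u:=u) sA) hb => /mapP [a aA E].
  subst b.
  exists a => // Cl sCl.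
  have := supp_sub (supported_act (u:=u) sCl) hb.
  by rewrite mem_map //; apply: minj.
case=> a ha -> Bl sBl.
have := supp_sub (supported_pre sA sBl) ha.
by rewrite mem_filter => /andP [].
Qed.

End Supports.



Section Acth.
Variable Y : EMCat.

Lemma acth_decomp (u v : Mon) (x y : Y) (f : Hom x y) :
  acth u v f = comp (acth idM v (idm y)) (comp (acth idM idM f) (acth u idM (idm x))).
Proof. by rewrite acth_comp comp_idr acth_comp comp_idl. Qed.

Lemma heq_acth_unit (x y : Y) (f : Hom x y) : heq (acth idM idM f) f.
Proof. exists (act_unit x), (act_unit y); exact: acth_unit. Qed.

Lemma acth_inj (u v : Mon) (x y : Y) : injective (@acth Y u v x y).
Proof.
move=> f g E.
have K : forall h : Hom x y, comp (acth v idM (idm y)) (comp (acth u v h) (acth idM u (idm x)))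
          = acth idM idM h.
  by move=> h; rewrite acth_comp comp_idr acth_comp comp_idl.
have := K f; rewrite E K => E2.
apply: heq_eq; apply: heq_trans (heq_sym (heq_acth_unit f)) _.
by rewrite -E2; apply: heq_acth_unit.
Qed.

Lemma acth_surj (u v : Mon) (x y : Y) (g : Hom (act u x) (act v y)) :
  exists f : Hom x y, acth u v f = g.
Proof.
set k := comp (acth v idM (idm y)) (comp g (acth idM u (idm x))).
exists (hcast (act_unit x) (act_unit y) k).
have E : acth idM idM (hcast (act_unit x) (act_unit y) k) = k.
  apply: (hcast_inj (ea := act_unit x) (eb := act_unit y)); exact: acth_unit.
rewrite acth_decomp E /k.
have CD : comp (acth idM u (idm x)) (acth u idM (idm x)) = idm (act u x).
  by rewrite acth_comp comp_idl acth_id.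
have AB : comp (acth idM v (idm y)) (acth v idM (idm y)) = idm (act v y).
  by rewrite acth_comp comp_idl acth_id.
rewrite -!comp_assoc CD comp_idr !comp_assoc AB comp_idl //.
Qed.

Lemma heq_acth_congr (u u' v v' : Mon) (x y : Y) (f : Hom x y) :
  u = u' -> v = v' -> heq (acth u v f) (acth u' v' f).
Proof. move=> -> ->; exact: heq_refl. Qed.

Lemma heq_acth_assoc (u v u' v' : Mon) (x y : Y) (f : Hom x y) :
  heq (acth u' v' (acth u v f)) (acth (mulM u' u) (mulM v' v) f).
Proof. exists (act_assoc u' u x), (act_assoc v' v y); exact: acth_assoc. Qed.

End Acth.

Lemma heq_pi (I : Type) (Y : I -> Category) (a b a' b' : piCat Y)
  (f : Hom a b) (g : Hom a' b') :
  a = a' -> b = b' -> (forall i, heq (f i) (g i)) -> heq f g.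
Proof.
move=> ea eb H; exists ea, eb.
case: a' / ea in g H *; case: b' / eb in g H *.
apply: functional_extensionality_dep => i; exact: heq_eq (H i).
Qed.

Lemma slice_ract n (f : InjN n) (u : 'I_n -> Mon) i :
  slice (ract f u) i = mulM (slice f i) (u i).
Proof. by apply: monE. Qed.

Section PsiSec.
Variables (n : nat) (X : 'I_n -> EMCat).

Lemma Psi_inj (c d : Cod X) (m m' : Hom c d) :
  fhom (Psi X) m = fhom (Psi X) m' -> m = m'.
Proof.
case: m m' => [[] m2] [[] m2'] /= E; congr pair.
apply: functional_extensionality_dep => i.
apply: (@acth_inj _ (slice c.1 i) (slice d.1 i)).
have := congr1 (fun F : pi_hom _ _ => F i) E; exact.
Qed.

Lemma Psi_surj (c d : Cod X) (g : Hom (Psi X c) (Psi X d)) :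
  exists m : Hom c d, fhom (Psi X) m = g.
Proof.
pose m2 i := proj1_sig (constructive_indefinite_description _
   (@acth_surj (X i) (slice c.1 i) (slice d.1 i) (c.2 i) (d.2 i) (g i))).
exists (tt, m2); apply: functional_extensionality_dep => i /=.
exact: (proj2_sig (constructive_indefinite_description _
   (@acth_surj (X i) (slice c.1 i) (slice d.1 i) (c.2 i) (d.2 i) (g i)))).
Qed.

Definition Minv (c d : Cod X) (g : Hom (Psi X c) (Psi X d)) : Hom c d :=
  proj1_sig (constructive_indefinite_description _ (Psi_surj g)).
Lemma MinvK (c d : Cod X) (g : Hom (Psi X c) (Psi X d)) : fhom (Psi X) (Minv g) = g.
Proof. exact: (proj2_sig (constructive_indefinite_description _ (Psi_surj g))). Qed.

Lemma PsiLR_obj (e : Dom X) : Psi X (Lfun X e) = Psi X (Rfun X e).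
Proof.
apply: functional_extensionality_dep => i /=.
by rewrite /Psiobj /= slice_ract act_mul.
Qed.

Lemma PsiLR_hom (e1 e2 : Dom X) (h : Hom e1 e2) :
  heq (fhom (Psi X) (fhom (Lfun X) h)) (fhom (Psi X) (fhom (Rfun X) h)).
Proof.
apply: heq_pi; rewrite ?PsiLR_obj // => i /=.
apply: heq_trans (heq_acth_congr _ (slice_ract _ _ _) (slice_ract _ _ _)) _.
exact: heq_sym (heq_acth_assoc _ _ _ _ _).
Qed.

Hypothesis tameX : forall i, tame (X i).

Lemma psi_disj (c : Cod X) : disjoint_supports (Psi X c).
Proof.
case: c => f x i j ij a hi hj.
case: (tameX (x i)) => Ai sAi; case: (tameX (x j)) => Aj sAj.
have := supp_sub (supported_act (u := slice f i) sAi) hi => /mapP [k1 _ E1].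
have := supp_sub (supported_act (u := slice f j) sAj) hj => /mapP [k2 _ E2].
have : f (i, k1) = f (j, k2) by rewrite /= in E1 E2; rewrite -E1 -E2.
by move/jinj => [eij _]; rewrite eij eqxx in ij.
Qed.

Lemma psi_surj_obj (y : PX X) : disjoint_supports y -> exists c, Psi X c = y.
Proof.
move=> dy.
have HS : forall i, exists S, [/\ uniq S, supported (y i) S & forall a, a \in S <-> supp (y i) a].
  move=> i; case: (tameX (y i)) => B sB; exact: min_support sB.
pose S i := proj1_sig (constructive_indefinite_description _ (HS i)).
have SP i : [/\ uniq (S i), supported (y i) (S i) & forall a, a \in S i <-> supp (y i) a].
  exact: (proj2_sig (constructive_indefinite_description _ (HS i))).
set K := (\max_(m <- flatten [seq S i | i <- enum 'I_n]) m).+1.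
have HK i m : m \in S i -> m < K.
  move=> mS; rewrite ltnS; apply: (leq_bigmax_seq (F := id) m) => //.
  by apply/flattenP; exists (S i) => //; apply: map_f; rewrite mem_enum.
pose g (p : 'I_n * nat) := if p.2 \in S p.1 then p.2 else K + (p.2 * n + p.1).
have gi : injective g.
  move=> [i1 k1] [i2 k2]; rewrite /g /=.
  case: ifP => h1; case: ifP => h2.
  - move=> E; subst k2; congr pair.
    apply/eqP; apply: contraT => ne.
    case: (SP i1) => _ _ H1; case: (SP i2) => _ _ H2.
    by case: (dy i1 i2 ne k1); [apply/H1 | apply/H2].
  - by move=> E; have := HK _ _ h1; rewrite E ltnNge leq_addr.
  - by move=> E; have := HK _ _ h2; rewrite -E ltnNge leq_addr.
  - move/eqP; rewrite eqn_add2l => /eqP E.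
    have n0 : 0 < n := leq_ltn_trans (leq0n i1) (ltn_ord i1).
    have em : (k1 * n + i1) %% n = (k2 * n + i2) %% n by rewrite E.
    rewrite !modnMDl !modn_small // in em.
    have ed : (k1 * n + i1) %/ n = (k2 * n + i2) %/ n by rewrite E.
    rewrite !divnMDl // !divn_small // !addn0 in ed.
    by subst k2; congr pair; apply: ord_inj.
exists ({| jfun := g; jinj := gi |}, y).
apply: functional_extensionality_dep => i /=; rewrite /Psiobj /=.
rewrite -{2}(act_idM (y i)); case: (SP i) => _ sS _.
by apply: (agree_act sS) => a aS /=; rewrite /g /= aS.
Qed.

End PsiSec.



Lemma fresh (g : nat -> nat) : injective g -> forall L : seq nat, exists m, g m \notin L.
Proof.
move=> gi L; apply: NNPP => H.
have all : forall m, g m \in L.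
  by move=> m; apply: NNPP => h; apply: H; exists m; apply/negP.
have : size (map g (iota 0 (size L).+1)) <= size L.
  apply: uniq_leq_size; first by rewrite map_inj_uniq ?iota_uniq.
  by move=> y /mapP [m _ ->].
by rewrite size_map size_iota ltnn.
Qed.

Lemma code_inj n (r1 r2 i1 i2 : nat) : i1 < n -> i2 < n ->
  r1 * n + i1 = r2 * n + i2 -> r1 = r2 /\ i1 = i2.
Proof.
move=> h1 h2 E.
have n0 : 0 < n := leq_ltn_trans (leq0n i1) h1.
have em : (r1 * n + i1) %% n = (r2 * n + i2) %% n by rewrite E.
rewrite !modnMDl !modn_small // in em.
have ed : (r1 * n + i1) %/ n = (r2 * n + i2) %/ n by rewrite E.
by rewrite !divnMDl // !divn_small // !addn0 in ed.
Qed.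

Section PathSec.
Variables (n : nat) (X : 'I_n -> EMCat).
Hypothesis tameX : forall i, tame (X i).

Lemma path_ex (n0 : 0 < n) (c c' : Cod X) : Psi X c = Psi X c' ->
  exists e1 e2 e2' e1' : Dom X, [/\ c = Rfun X e1, Lfun X e1 = Lfun X e2,
     Rfun X e2 = Rfun X e2', Lfun X e2' = Lfun X e1' & Rfun X e1' = c'].
Proof.
case: c c' => [f x] [f' x'] E.
have Ey : forall i, act (slice f i) (x i) = act (slice f' i) (x' i).
  by move=> i; exact: (congr1 (fun F : PX X => F i) E).
have HA : forall (xx : forall i, X i) i, exists A,
    [/\ uniq A, supported (xx i) A & forall a, a \in A <-> supp (xx i) a].
  move=> xx i; case: (tameX (xx i)) => B sB; exact: min_support sB.
pose A i := proj1_sig (constructive_indefinite_description _ (HA x i)).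
have AP i : [/\ uniq (A i), supported (x i) (A i) & forall a, a \in A i <-> supp (x i) a].
  exact: (proj2_sig (constructive_indefinite_description _ (HA x i))).
pose A' i := proj1_sig (constructive_indefinite_description _ (HA x' i)).
have A'P i : [/\ uniq (A' i), supported (x' i) (A' i) & forall a, a \in A' i <-> supp (x' i) a].
  exact: (proj2_sig (constructive_indefinite_description _ (HA x' i))).
pose S i := map (slice f i) (A i).
have Suniq i : uniq (S i).
  by rewrite map_inj_uniq; [case: (AP i) | apply: minj].
have key : forall i k, k \in A' i -> f' (i, k) \in S i.
  move=> i k kA; case: (A'P i) => _ sA' HA'; case: (AP i) => _ sA HAi.
  have h1 : supp (act (slice f' i) (x' i)) (f' (i, k)).
    by apply/(supp_act _ _ sA'); exists k => //; apply/HA'.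
  rewrite -Ey in h1; case/(supp_act _ _ sA): h1 => a ha ->.
  by apply: map_f; apply/HAi.
pose Sall := flatten [seq S i | i <- enum 'I_n].
have inSall : forall i m, m \in S i -> m \in Sall.
  by move=> i m mS; apply/flattenP; exists (S i) => //; apply: map_f; rewrite mem_enum.
pose dI k : 'I_n := Ordinal (ltn_pmod k n0).
pose gfun k := if odd (k %/ n) then (fun m => f' (dI k, m)) else (fun m => f (dI k, m)).
have gfi : forall k, injective (gfun k).
  move=> k m1 m2; rewrite /gfun; case: ifP => _ /jinj [] //.
pose mk k L := proj1_sig (constructive_indefinite_description _ (fresh (gfi k) (L ++ Sall))).
have mkP : forall k L, gfun k (mk k L) \notin L ++ Sall.
  move=> k L; exact: (proj2_sig (constructive_indefinite_description _ (fresh (gfi k) (L ++ Sall)))).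
pose pre := fix pre k := match k with 0 => [::] | k'.+1 => rcons (pre k') (gfun k' (mk k' (pre k'))) end.
pose idx k := mk k (pre k).
pose a k := gfun k (idx k).
have pre_eq : forall k, pre k = map a (iota 0 k).
  have preS : forall k, pre k.+1 = rcons (pre k) (a k) by [].
  elim=> // k IH; rewrite preS -addn1 iotaD map_cat /= -cats1 -IH add0n //.
have afr : forall k, a k \notin pre k ++ Sall by move=> k; exact: mkP.
have aS : forall k, a k \notin Sall.
  by move=> k; have := afr k; rewrite mem_cat negb_or => /andP [].
have ai : injective a.
  move=> k1 k2 Ek.
  have gen : forall k1 k2, k1 < k2 -> a k1 = a k2 -> False.
    move=> j1 j2 lt Ej; have := afr j2; rewrite mem_cat negb_or pre_eq -Ej.
    by rewrite map_f // mem_iota.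
  case: (ltngtP k1 k2) => // lt; first by case: (gen _ _ lt Ek).
  by case: (gen _ _ lt (esym Ek)).
have dIe : forall t (i : 'I_n), dI (t * n + i) = i.
  by move=> t i; apply: ord_inj; rewrite /= modnMDl modn_small.
have aval : forall t (i : 'I_n), a (t * n + i) =
    (if odd t then f' (i, idx (t * n + i)) else f (i, idx (t * n + i))).
  move=> t i; rewrite /a /gfun divnMDl // divn_small // addn0 dIe.
  by case: ifP.
pose v i k := if k \in A i then k else idx (k.*2 * n + i).
have vi : forall i, injective (v i).
  move=> i k1 k2; rewrite /v.
  have hh : forall k1 k2, k1 \in A i -> k2 \notin A i -> k1 = idx (k2.*2 * n + i) -> False.
    move=> j1 j2 h1 h2 Ej.
    have := aS (j2.*2 * n + i); rewrite aval odd_double -Ej.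
    by move/negP; apply; exact: (inSall i _ (map_f (slice f i) h1)).
  case: ifP => h1; case: ifP => h2 //.
  - by move=> Ej; case: (hh _ _ h1 (negbT h2) Ej).
  - by move=> Ej; case: (hh _ _ h2 (negbT h1) (esym Ej)).
  move=> Ej; have : a (k1.*2 * n + i) = a (k2.*2 * n + i) by rewrite !aval !odd_double Ej.
  move/ai/(code_inj (ltn_ord i) (ltn_ord i)) => [E1 _].
  exact: double_inj E1.
pose v' i k := if k \in A' i then k else idx ((k.*2).+1 * n + i).
have v'i : forall i, injective (v' i).
  move=> i k1 k2; rewrite /v'.
  have hh : forall k1 k2, k1 \in A' i -> k2 \notin A' i -> k1 = idx ((k2.*2).+1 * n + i) -> False.
    move=> j1 j2 h1 h2 Ej.
    have := aS ((j2.*2).+1 * n + i); rewrite aval /= odd_double /= -Ej.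
    by move/negP; apply; exact: (inSall i _ (key _ _ h1)).
  case: ifP => h1; case: ifP => h2 //.
  - by move=> Ej; case: (hh _ _ h1 (negbT h2) Ej).
  - by move=> Ej; case: (hh _ _ h2 (negbT h1) (esym Ej)).
  move=> Ej; have : a ((k1.*2).+1 * n + i) = a ((k2.*2).+1 * n + i).
    by rewrite !aval /= !odd_double /= Ej.
  move/ai/(code_inj (ltn_ord i) (ltn_ord i)) => [E1 _].
  by case: E1 => /double_inj.
pose V i := mkMon (vi i).
pose V' i := mkMon (v'i i).
pose hf (p : 'I_n * nat) := if p.2 < size (S p.1) then nth 0 (S p.1) p.2
                            else a ((p.2 - size (S p.1)) * n + p.1).
have hfi : injective hf.
  move=> [i1 m1] [i2 m2]; rewrite /hf /=.
  case: ifP => h1; case: ifP => h2.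
  - move=> Ej.
    have /mapP [b1 _ E1] := mem_nth 0 h1.
    have /mapP [b2 _ E2] := mem_nth 0 h2.
    have : f (i1, b1) = f (i2, b2) by rewrite /= in E1 E2; rewrite -E1 -E2.
    move/jinj => [ei _]; subst i2; congr pair.
    by apply/eqP; rewrite -(nth_uniq 0 h1 h2 (Suniq i1)) Ej.
  - by move=> Ej; have := aS ((m2 - size (S i2)) * n + i2); rewrite -Ej (inSall i1) // mem_nth.
  - by move=> Ej; have := aS ((m1 - size (S i1)) * n + i1); rewrite Ej (inSall i2) // mem_nth.
  move/ai/(code_inj (ltn_ord i1) (ltn_ord i2)) => [E1 E2].
  have ei : i1 = i2 by apply: ord_inj.
  subst i2; congr pair.
  have l1 : size (S i1) <= m1 by rewrite leqNgt h1.
  have l2 : size (S i1) <= m2 by rewrite leqNgt h2.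
  by rewrite -(subnK l1) -(subnK l2) E1.
pose H := {| jfun := hf; jinj := hfi |}.
pose u i k := if k \in A i then index (f (i, k)) (S i) else size (S i) + k.*2.
have ui : forall i, injective (u i).
  move=> i k1 k2; rewrite /u.
  have lt : forall k, k \in A i -> index (f (i, k)) (S i) < size (S i).
    by move=> k h; rewrite index_mem; exact: (map_f (slice f i) h).
  case: ifP => h1; case: ifP => h2.
  - move=> Ej; have := nth_index 0 (map_f (slice f i) h1).
    rewrite /= Ej nth_index; last exact: (map_f (slice f i) h2).
    by move/jinj => [].
  - by move=> Ej; have := lt _ h1; rewrite Ej ltnNge leq_addr.
  - by move=> Ej; have := lt _ h2; rewrite -Ej ltnNge leq_addr.
  - by move/addnI/double_inj.
pose u' i k := if k \in A' i then index (f' (i, k)) (S i) else size (S i) + (k.*2).+1.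
have u'i : forall i, injective (u' i).
  move=> i k1 k2; rewrite /u'.
  have lt : forall k, k \in A' i -> index (f' (i, k)) (S i) < size (S i).
    by move=> k h; rewrite index_mem; exact: key.
  case: ifP => h1; case: ifP => h2.
  - move=> Ej; have := nth_index 0 (key _ _ h1).
    rewrite Ej nth_index; last exact: key.
    by move/jinj => [].
  - by move=> Ej; have := lt _ h1; rewrite Ej ltnNge leq_addr.
  - by move=> Ej; have := lt _ h2; rewrite -Ej ltnNge leq_addr.
  - by move/addnI => [] /double_inj.
pose U i := mkMon (ui i).
pose U' i := mkMon (u'i i).
have HU : ract H U = ract f V.
  apply: InjNE => [[i k]] /=; rewrite /hf /= /u /v.
  case h: (k \in A i).
    have h' : f (i, k) \in S i := map_f (slice f i) h.
    by rewrite index_mem h' nth_index.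
  rewrite ltnNge leq_addr /= addKn aval odd_double //.
have HU' : ract H U' = ract f' V'.
  apply: InjNE => [[i k]] /=; rewrite /hf /= /u' /v'.
  case h: (k \in A' i).
    by rewrite index_mem key // nth_index // key.
  rewrite ltnNge leq_addr /= addKn aval /= odd_double //.
have fixV : forall i, act (V i) (x i) = x i.
  move=> i; case: (AP i) => _ sA _; apply: sA => k kA /=; by rewrite /v kA.
have fixV' : forall i, act (V' i) (x' i) = x' i.
  move=> i; case: (A'P i) => _ sA _; apply: sA => k kA /=; by rewrite /v' kA.
exists ((f, V), x), ((H, U), x), ((H, U'), x'), ((f', V'), x'); split.
- rewrite /= /Robj /=; congr pair; apply: functional_extensionality_dep => i.
  by rewrite fixV.
- by rewrite /= /Lobj /= HU.
- rewrite /= /Robj /=; congr pair; apply: functional_extensionality_dep => i.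
  case: (AP i) => _ sA _; case: (A'P i) => _ sA' _.
  apply: (act_inj_supp (supported_act (u := U i) sA) (supported_act (u := U' i) sA')
            (u := slice H i)).
  rewrite -!act_mul -!slice_ract HU HU' !slice_ract !act_mul fixV fixV'.
  exact: Ey.
- by rewrite /= /Lobj /= HU'.
- rewrite /= /Robj /=; congr pair; apply: functional_extensionality_dep => i.
  by rewrite fixV'.
Qed.

End PathSec.



Lemma inj_surj_bij (A B : Type) (f : A -> B) :
  injective f -> (forall y, exists x, f x = y) -> bijective f.
Proof.
move=> fi fs.
pose g y := proj1_sig (constructive_indefinite_description _ (fs y)).
have gK : cancel g f by move=> y; exact: (proj2_sig (constructive_indefinite_description _ (fs y))).
exists g => // x; apply: fi; exact: gK.
Qed.

Lemma sigE (T : Type) (P : T -> Prop) (a b : {x : T | P x}) : sval a = sval b -> a = b.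
Proof.
case: a b => [x px] [y py] /= E; subst y; by rewrite (proof_irrelevance _ px py).
Qed.

Section MainSec.
Variables (n : nat) (X : 'I_n -> EMCat).
Hypothesis tameX : forall i, tame (X i).
Variables (Q : Category) (q : Functor (Cod X) Q).
Hypothesis coeq : is_coequalizer (Lfun X) (Rfun X) q.

Definition Twin (c d c' d' : Cod X) : Prop :=
  [/\ q c = q c', q d = q d', Psi X c = Psi X c', Psi X d = Psi X d' &
   forall (m : Hom c d) (m' : Hom c' d'),
     heq (fhom (Psi X) m) (fhom (Psi X) m') -> heq (fhom q m) (fhom q m')].

Lemma Twin_eq c d c' d' : c = c' -> d = d' -> Twin c d c' d'.
Proof.
move=> <- <-; split=> // m m' /heq_eq /Psi_inj ->; exact: heq_refl.
Qed.

Lemma Twin_sym c d c' d' : Twin c d c' d' -> Twin c' d' c d.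
Proof.
case=> e1 e2 e3 e4 H; split=> // m m' /heq_sym /H; exact: heq_sym.
Qed.

Lemma Twin_trans c d c' d' c'' d'' :
  Twin c d c' d' -> Twin c' d' c'' d'' -> Twin c d c'' d''.
Proof.
case=> e1 e2 e3 e4 H [e1' e2' e3' e4' H'].
split; try by [apply: etrans; eassumption].
move=> m m'' hm.
pose m' := Minv (hcast e3 e4 (fhom (Psi X) m)).
have h1 : heq (fhom (Psi X) m) (fhom (Psi X) m').
  by rewrite /m' MinvK; apply: heq_sym; apply: heq_hcast.
apply: heq_trans (H _ _ h1) (H' _ _ _).
exact: heq_trans (heq_sym h1) hm.
Qed.

Lemma Twin_step (e1 e2 : Dom X) : Twin (Lfun X e1) (Lfun X e2) (Rfun X e1) (Rfun X e2).
Proof.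
case: coeq => [cq _].
split; try exact: (feq_obj cq); try exact: PsiLR_obj.
move=> [[] m2] m' H.
pose h : Hom e1 e2 := ((tt, tt), m2).
have -> : m' = fhom (Rfun X) h.
  apply: Psi_inj; apply: heq_eq.
  apply: heq_trans (heq_sym H) _.
  exact: (PsiLR_hom h).
exact: (feq_hom cq h).
Qed.

Lemma Twin_all c d c' d' : Psi X c = Psi X c' -> Psi X d = Psi X d' -> Twin c d c' d'.
Proof.
move=> Ec Ed.
case: (posnP n) => [n0|n0].
  have eqc : forall c c' : Cod X, c = c'.
    move=> [f x] [f' x']; congr pair.
      by apply: InjNE => [[i k]]; have := leq_trans (ltn_ord i) (eq_leq n0).
    by apply: functional_extensionality_dep => i; have := leq_trans (ltn_ord i) (eq_leq n0).
  exact: Twin_eq.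
case: (path_ex tameX n0 Ec) => e1 [e2 [e2' [e1' [h1 h2 h3 h4 h5]]]].
case: (path_ex tameX n0 Ed) => f1 [f2 [f2' [f1' [k1 k2 k3 k4 k5]]]].
apply: Twin_trans (Twin_eq h1 k1) _.
apply: Twin_trans (Twin_sym (Twin_step _ _)) _.
apply: Twin_trans (Twin_eq h2 k2) _.
apply: Twin_trans (Twin_step _ _) _.
apply: Twin_trans (Twin_eq h3 k3) _.
apply: Twin_trans (Twin_sym (Twin_step _ _)) _.
apply: Twin_trans (Twin_eq h4 k4) _.
apply: Twin_trans (Twin_step _ _) _.
exact: Twin_eq h5 k5.
Qed.

Definition QOb := {y : PX X | exists c, Psi X c = y}.
Definition Qcat : Category :=
  {| Ob := QOb; Hom := fun a b => @Hom (PX X) (sval a) (sval b);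
     idm := fun a => idm (sval a);
     comp := fun a b c g f => comp g f;
     comp_idl := fun a b f => comp_idl f;
     comp_idr := fun a b f => comp_idr f;
     comp_assoc := fun a b c d f g h => comp_assoc f g h |}.

Lemma heqQ (a b a' b' : Qcat) (f : Hom a b) (g : Hom a' b') :
  heq (C := PX X) f g -> heq f g.
Proof.
move=> H; case: (heq_obj H) => ea eb.
have ea' := sigE ea; have eb' := sigE eb.
subst a' b'; rewrite (heq_eq H); exact: heq_refl.
Qed.

Definition q' : Functor (Cod X) Qcat :=
  {| fobj := fun c => (exist (fun y => exists c, Psi X c = y) (Psi X c) (ex_intro _ c erefl) : Qcat);
     fhom := fun a b m => fhom (Psi X) m;
     fhom_id := fun a => fhom_id (Psi X) a;
     fhom_comp := fun a b c f g => fhom_comp (Psi X) f g |}.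

Definition N (y : Qcat) : Cod X :=
  proj1_sig (constructive_indefinite_description _ (proj2_sig y)).
Lemma NP (y : Qcat) : Psi X (N y) = sval y.
Proof. exact: (proj2_sig (constructive_indefinite_description _ (proj2_sig y))). Qed.

Definition jhom (a b : Qcat) (g : Hom a b) : Hom (q (N a)) (q (N b)) :=
  fhom q (Minv (hcast (esym (NP a)) (esym (NP b)) g)).

Lemma jhom_id (a : Qcat) : jhom (idm a) = idm (q (N a)).
Proof.
rewrite /jhom -(fhom_id q); congr (fhom q _).
apply: Psi_inj; rewrite MinvK fhom_id /=.
exact (hcast_idm (C := PX X) (esym (NP a)) (esym (NP a))).
Qed.

Lemma jhom_comp (a b c : Qcat) (f : Hom a b) (g : Hom b c) :
  jhom (comp g f) = comp (jhom g) (jhom f).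
Proof.
rewrite /jhom -(fhom_comp q); congr (fhom q _).
apply: Psi_inj; rewrite MinvK fhom_comp !MinvK /=.
exact (hcast_comp (C := PX X) (esym (NP a)) (esym (NP b)) (esym (NP c)) f g).
Qed.

Definition j : Functor Qcat Q :=
  {| fobj := fun y => q (N y); fhom := jhom; fhom_id := jhom_id; fhom_comp := jhom_comp |}.

Lemma J1 : feq (fcomp j q') q.
Proof.
have T : forall c d : Cod X, Twin (N (q' c)) (N (q' d)) c d.
  by move=> c d; apply: Twin_all; rewrite NP.
apply: feqP => [c|c d m] /=.
  by rewrite /fcomp_obj /=; case: (T c c).
case: (T c d) => _ _ _ _ H; apply: H.
rewrite MinvK; exact: heq_hcast.
Qed.

Variable Phi : Functor Q (PX X).
Hypothesis hPhi : feq (fcomp Phi q) (Psi X).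

Lemma PhiIm (a : Q) : exists c, Psi X c = Phi a.
Proof.
case: (coeq_surj coeq a) => c <-; exists c; exact: esym (feq_obj hPhi c).
Qed.

Definition Phi' : Functor Q Qcat :=
  {| fobj := fun a => (exist (fun y => exists c, Psi X c = y) (Phi a) (PhiIm a) : Qcat);
     fhom := fun a b g => fhom Phi g;
     fhom_id := fun a => fhom_id Phi a;
     fhom_comp := fun a b c f g => fhom_comp Phi f g |}.

Lemma J2 : feq (fcomp Phi' q) q'.
Proof.
apply: feqP => [c|c d m] /=.
  by apply: sigE; exact: (feq_obj hPhi c).
apply: heqQ; exact: (feq_hom hPhi m).
Qed.

Lemma JP : feq (fcomp j Phi') (idF Q).
Proof.
apply: (coeq_uniq coeq).
apply: feq_trans (feq_assoc _ _ _) _.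
apply: feq_trans (feq_compl j J2) _.
apply: feq_trans J1 _.
exact: feq_sym (feq_idl _).
Qed.

End MainSec.

Theorem mainTheorem15 (n : nat) (X : 'I_n -> EMCat)
  (tameX : forall i, tame (X i))
  (Q : Category) (q : Functor (Cod X) Q)
  (coeq : is_coequalizer (Lfun X) (Rfun X) q)
  (Phi : Functor Q (PX X))
  (hPhi : feq (fcomp Phi q) (Psi X)) :
  injective (fobj Phi) /\
  (forall a b : Q, bijective (@fhom _ _ Phi a b)) /\
  (forall y : PX X, (exists a : Q, Phi a = y) <-> disjoint_supports y).
Proof.
have JPf := JP tameX coeq hPhi.
split.
  move=> a b E.
  have E' : Phi' coeq hPhi a = Phi' coeq hPhi b by apply: sigE.
  have ea : fobj (j q) (Phi' coeq hPhi a) = a := feq_obj JPf a.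
  have eb : fobj (j q) (Phi' coeq hPhi b) = b := feq_obj JPf b.
  by rewrite -[LHS]ea -[RHS]eb E'.
split.
  move=> a b; apply: inj_surj_bij.
    move=> g1 g2 E.
    have h1 := feq_hom JPf g1; have h2 := feq_hom JPf g2.
    apply: heq_eq; apply: heq_trans (heq_sym h1) _.
    rewrite /= -/(fhom Phi g1) E; exact: h2.
  move=> g'.
  case: (coeq_surj coeq a) => c Ec; subst a.
  case: (coeq_surj coeq b) => d Ed; subst b.
  have eo := feq_obj hPhi.
  exists (fhom q (Minv (hcast (eo c) (eo d) g'))).
  apply: heq_eq; apply: heq_trans (feq_hom hPhi _) _.
  rewrite MinvK; exact: heq_hcast.
move=> y; split.
  case=> a <-; case: (coeq_surj coeq a) => c <-.
  have e : Phi (q c) = Psi X c := feq_obj hPhi c.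
  rewrite e; exact: psi_disj.
move=> /(psi_surj_obj tameX) [c <-]; exists (q c); exact: (feq_obj hPhi c).
Qed.
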